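(* Let $n$ be a positive integer, $k$ an integer with $0\le k\le n$, and $0<\phi<\infty$. For $\ell = 0,\dots,n-k$ set $H_\ell = \phi^\ell\, S(n-\ell,k,\phi)/S(n,k,\phi)$. Then the moment generating function $m(t)=\mathbb{E}(e^{tR})$ of a random variable $R\sim\mathrm{Spillage}(n,k,\phi)$ satisfies, for all real $t$, $$m(t) = e^{t(n-k)}\sum_{\ell=0}^{n-k}\binom{n}{\ell}(e^{-t}-1)^\ell\, H_\ell.$$
   Context: $S(j,k)$ denotes the (central) Stirling numbers of the second kind. The noncentral Stirling numbers of the second kind are defined by $S(n,k,\phi) = \sum_{r=0}^{n-k}\binom{n}{k+r}\phi^{n-k-r}S(k+r,k)$ (zero if $n<k$). The spillage distribution $\mathrm{Spillage}(n,k,\phi)$ (for $0<\phi<\infty$) is the distribution on $\{0,\dots,n-k\}$ with mass function $\mathrm{Spillage}(r\mid n,k,\phi) = \binom{n}{k+r}\phi^{n-k-r}S(k+r,k)/S(n,k,\phi)$. *)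

(* Defs.v *)
From Stdlib Require Import Reals Arith.
Open Scope R_scope.

Fixpoint stirling2 (n k : nat) : nat :=
  match n, k with
  | O, O => 1%nat
  | O, S _ => 0%nat
  | S _, O => 0%nat
  | S n', S k' => (S k' * stirling2 n' (S k') + stirling2 n' k')%nat
  end.

Definition ncstirling2 (n k : nat) (phi : R) : R :=
  if (n <? k)%nat then 0 else
  sum_f_R0 (fun r => C n (k + r) * phi ^ (n - k - r) * INR (stirling2 (k + r) k))
           (n - k).

Definition spillage_pmf (n k : nat) (phi : R) (r : nat) : R :=
  C n (k + r) * phi ^ (n - k - r) * INR (stirling2 (k + r) k) / ncstirling2 n k phi.

Definition spillage_mgf (n k : nat) (phi t : R) : R :=
  sum_f_R0 (fun r => exp (t * INR r) * spillage_pmf n k phi r) (n - k).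

Definition Hcoef (n k : nat) (phi : R) (l : nat) : R :=
  phi ^ l * ncstirling2 (n - l) k phi / ncstirling2 n k phi.

(* Main.v *)
Require Import Defs.
From Stdlib Require Import Reals Arith Lia Lra.
Open Scope R_scope.

Lemma exp_pow_ (x : R) (m : nat) : exp x ^ m = exp (x * INR m).
Proof.
  induction m as [|m IH].
  - simpl. rewrite Rmult_0_r, exp_0. reflexivity.
  - rewrite S_INR. simpl. rewrite IH, <- exp_plus. f_equal. ring.
Qed.

Lemma sum_exchange (f : nat -> nat -> R) (a b : nat) :
  sum_f_R0 (fun i => sum_f_R0 (fun j => f i j) b) a =
  sum_f_R0 (fun j => sum_f_R0 (fun i => f i j) a) b.
Proof.
  induction a as [|a IH].
  - reflexivity.
  - simpl. rewrite IH. rewrite <- sum_plus. reflexivity.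
Qed.

Lemma sum_trunc (f : nat -> R) (m d : nat) : (m <= d)%nat ->
  sum_f_R0 (fun r => if (r <=? m)%nat then f r else 0) d = sum_f_R0 f m.
Proof.
  intro H. induction d as [|d IH].
  - assert (m = 0%nat) by lia. subst. reflexivity.
  - destruct (Nat.eq_dec m (S d)) as [->|Hne].
    + rewrite tech5. rewrite Nat.leb_refl. rewrite tech5.
      f_equal. apply sum_eq. intros i Hi.
      assert ((i <=? S d)%nat = true) as E by (apply Nat.leb_le; lia).
      rewrite E. reflexivity.
    + rewrite tech5. rewrite IH by lia.
      assert ((S d <=? m)%nat = false) as E by (apply Nat.leb_gt; lia).
      rewrite E. ring.
Qed.

Lemma binom_swap (n l j : nat) : (l + j <= n)%nat ->
  C n l * C (n - l) j = C n j * C (n - j) l.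
Proof.
  intro H. unfold C.
  replace (n - l - j)%nat with (n - j - l)%nat by lia.
  assert (A := INR_fact_neq_0 n).
  assert (B := INR_fact_neq_0 l).
  assert (D := INR_fact_neq_0 j).
  assert (E := INR_fact_neq_0 (n - l)).
  assert (F := INR_fact_neq_0 (n - j)).
  assert (G := INR_fact_neq_0 (n - j - l)).
  field. repeat split; assumption.
Qed.

Theorem lemma2 (n k : nat) (phi t : R) :
  (0 < n)%nat -> (k <= n)%nat -> 0 < phi ->
  spillage_mgf n k phi t =
  exp (t * INR (n - k)) *
  sum_f_R0 (fun l => C n l * (exp (- t) - 1) ^ l * Hcoef n k phi l) (n - k).
Proof.
  intros _ Hkn _.
  set (d := (n - k)%nat).
  set (N := ncstirling2 n k phi).
  set (x := exp (- t) - 1).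
  set (a := fun r => C n (k + r) * phi ^ (n - k - r) * INR (stirling2 (k + r) k)).
  set (g := fun l r => if (r <=? d - l)%nat then
      C n l * x ^ l * (C (n - l) (k + r) * phi ^ (d - r) * INR (stirling2 (k + r) k))
      else 0).
  assert (S1 : forall l, (l <= d)%nat ->
     C n l * x ^ l * Hcoef n k phi l = sum_f_R0 (fun r => g l r) d / N).
  { intros l Hl. unfold Hcoef, g. fold N.
    rewrite (sum_trunc (fun r => C n l * x ^ l * (C (n - l) (k + r) * phi ^ (d - r) *
         INR (stirling2 (k + r) k))) (d - l) d) by lia.
    unfold ncstirling2 at 1.
    assert ((n - l <? k)%nat = false) as E by (apply Nat.ltb_ge; lia).
    rewrite E. replace (n - l - k)%nat with (d - l)%nat by lia.
    assert (Hs : C n l * x ^ l * phi ^ l * sum_f_R0 (fun r => C (n - l) (k + r) * phi ^ (d - l - r) * INR (stirling2 (k + r) k)) (d - l) = sum_f_R0 (fun r => C n l * x ^ l * (C (n - l) (k + r) * phi ^ (d - r) * INR (stirling2 (k + r) k))) (d - l)).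
    { rewrite scal_sum. apply sum_eq. intros r Hr.
      replace (d - r)%nat with ((d - l - r) + l)%nat by lia.
      rewrite pow_add. ring. }
    rewrite <- Hs. unfold Rdiv. ring. }
  assert (S2 : forall r, (r <= d)%nat ->
     sum_f_R0 (fun l => g l r) d = a r * exp (- t) ^ (d - r)).
  { intros r Hr.
    transitivity (sum_f_R0 (fun l => if (l <=? d - r)%nat then
        a r * (C (d - r) l * x ^ l * 1 ^ (d - r - l)) else 0) d).
    { apply sum_eq. intros l Hl. unfold g, a.
      destruct (Nat.leb_spec r (d - l)); destruct (Nat.leb_spec l (d - r)); try lia.
      - rewrite pow1.
        replace (n - k - r)%nat with (d - r)%nat by reflexivity.
        assert (Hb := binom_swap n l (k + r) ltac:(unfold d in *; lia)).
        replace (n - (k + r))%nat with (d - r)%nat in Hb by (unfold d; lia).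
        replace (C n l * x ^ l * (C (n - l) (k + r) * phi ^ (d - r) * INR (stirling2 (k + r) k)))
          with ((C n l * C (n - l) (k + r)) * x ^ l * phi ^ (d - r) * INR (stirling2 (k + r) k))
          by ring.
        rewrite Hb. ring.
      - reflexivity. }
    rewrite (sum_trunc (fun l => a r * (C (d - r) l * x ^ l * 1 ^ (d - r - l)))) by lia.
    transitivity (a r * sum_f_R0 (fun l => C (d-r) l * x^l * 1^(d-r-l)) (d-r)).
    { rewrite scal_sum. apply sum_eq; intros; ring. }
    rewrite <- binomial. unfold x. f_equal. f_equal. ring. }
  rewrite (sum_eq _ (fun l => sum_f_R0 (fun r => g l r) d / N) d S1).
  transitivity (sum_f_R0 (fun l => sum_f_R0 (fun r => g l r / N) d) d * exp (t * INR d)).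
  2:{ rewrite Rmult_comm. f_equal. apply sum_eq. intros l _. unfold Rdiv. rewrite (Rmult_comm _ (/ N)), scal_sum.
      apply sum_eq; intros; ring. }
  rewrite sum_exchange.
  unfold spillage_mgf. fold d. rewrite (Rmult_comm _ (exp _)), scal_sum.
  apply sum_eq. intros r Hr.
  transitivity (sum_f_R0 (fun l => g l r) d / N * exp (t * INR d)).
  2:{ unfold Rdiv. f_equal. rewrite Rmult_comm, scal_sum. reflexivity. }
  rewrite S2 by exact Hr. rewrite exp_pow_.
  unfold spillage_pmf. fold N. fold d. unfold a.
  replace (t * INR r) with (- t * INR (d - r) + t * INR d).
  - rewrite exp_plus. unfold Rdiv. fold d. ring.
  - rewrite minus_INR by exact Hr. ring.
Qed.
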